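(* There exist a finite-horizon MDP $M^\star$ with stochastic transitions and a data-collection policy $\pi_{\mathcal{D}}$ such that: (1) there is a model $M \neq M^\star$ whose expected multi-step reward-prediction loss (i.e., the loss in the limit of infinitely many data trajectories) is strictly smaller than that of the true model $M^\star$; and (2) this model $M$ gives a wrong evaluation to some policy $\pi$, i.e., $J_M(\pi) \neq J_{M^\star}(\pi)$.
   Context: A finite-horizon MDP with horizon $H$ has a state space $\mathcal{S}$, an action space $\mathcal{A}$, a fixed initial state $s_1$, transition kernel $P^\star:\mathcal{S}\times\mathcal{A}\to\Delta(\mathcal{S})$ and reward function $R^\star:\mathcal{S}\times\mathcal{A}\to[0,R_{\max}]$. For a model $M=(P,R)$ (a transition kernel and reward function on the same $\mathcal{S},\mathcal{A}$) and a policy $\pi$, $J_M(\pi)=\mathbb{E}_{M,\pi}[\sum_{h=1}^H r_h]$ denotes the expected return of $\pi$ when trajectories are generated by $M$; the true model is $M^\star=(P^\star,R^\star)$. Data consists of i.i.d. trajectories $(s_1,a_1,r_1,\ldots,s_H,a_H,r_H)$ generated by running a behavior policy $\pi_{\mathcal{D}}$ in $M^\star$, with $r_h=R^\star(s_h,a_h)$. The multi-step reward-prediction loss of a model $M=(P,R)$ on one trajectory is defined as follows: for each $h\in\{1,\ldots,H\}$, set $\hat s_h=s_h$ and for $h'=h,\ldots,H$ let $\hat r_{h'}=R(\hat s_{h'},a_{h'})$ and sample $\hat s_{h'+1}\sim P(\cdot\mid \hat s_{h'},a_{h'})$ (reusing the data actions $a_{h'}$); the loss is $\sum_{h=1}^H\sum_{h'=h}^H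 (r_{h'}-\hat r_{h'})^2$. The empirical loss averages this over data trajectories; the expected loss takes expectation over the data trajectory (drawn from $\pi_{\mathcal{D}}$ in $M^\star$) and over the model's sampling. *)

(* Defs.v *)
From HB Require Import structures.
From mathcomp Require Import all_boot all_order all_algebra.
From mathcomp Require Import reals.
Set Implicit Arguments. Unset Strict Implicit. Unset Printing Implicit Defensive.
Import Order.TTheory GRing.Theory Num.Theory.
Local Open Scope ring_scope.

Section MDPDefs.
Variable R : realType.
Variables S A : finType.

Definition is_dist (T : finType) (p : {ffun T -> R}) : Prop :=
  (forall x, 0 <= p x) /\ \sum_x p x = 1.

Definition kernel := S -> A -> {ffun S -> R}.
Definition valid_kernel (P : kernel) : Prop := forall s a, is_dist (P s a).

Definition stochastic (P : kernel) : Prop :=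
  exists s a s', 0 < P s a s' < 1.

(* (possibly time-dependent, stochastic) Markov policies; time index 0
   corresponds to step h = 1 of the paper *)
Definition policy := nat -> S -> {ffun A -> R}.
Definition valid_policy (pi : policy) : Prop := forall h s, is_dist (pi h s).

Record model := Model { trans : kernel; rew : S -> A -> R }.

Fixpoint Vrem (M : model) (pi : policy) (k h : nat) (s : S) : R :=
  match k with
  | 0 => 0
  | k'.+1 => \sum_a pi h s a *
              (rew M s a + \sum_s' trans M s a s' * Vrem M pi k' h.+1 s')
  end.

Definition J (M : model) (pi : policy) (H : nat) (s1 : S) : R :=
  Vrem M pi H 0 s1.

Fixpoint traj_prob_from (P : kernel) (pi : policy) (h : nat) (prev : S * A)
    (tau : seq (S * A)) : R :=
  match tau with
  | [::] => 1
  | (s, a) :: t => P prev.1 prev.2 s * pi h s a * traj_prob_from P pi h.+1 (s, a) t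
  end.

Definition traj_prob (P : kernel) (pi : policy) (s1 : S) (tau : seq (S * A)) : R :=
  match tau with
  | [::] => 1
  | (s, a) :: t => (s == s1)%:R * pi 0 s a * traj_prob_from P pi 1 (s, a) t
  end.

(* Expectation, over the model's sampling  s^_{h'+1} ~ P(.|s^_{h'},a_{h'}),
   of  sum_{h'} (r_{h'} - R(s^_{h'}, a_{h'}))^2  where the data suffix
   suf = [(s_{h'},a_{h'}); ...] supplies the actions and the data rewards
   r_{h'} = Rstar(s_{h'},a_{h'}), and shat is the current model state. *)
Fixpoint rollout_sqerr (Rstar : S -> A -> R) (M : model) (shat : S)
    (suf : seq (S * A)) : R :=
  match suf with
  | [::] => 0
  | (s, a) :: t => (Rstar s a - rew M shat a) ^+ 2
                   + \sum_s' trans M shat a s' * rollout_sqerr Rstar M s' t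
  end.

(* rollout started at s^_h = s_h for the suffix starting at step h *)
Definition loss_from (Rstar : S -> A -> R) (M : model) (suf : seq (S * A)) : R :=
  match suf with
  | [::] => 0
  | (s, _) :: _ => rollout_sqerr Rstar M s suf
  end.

(* multi-step reward-prediction loss of M on a trajectory, in expectation
   over the model's sampling: sum_{h=1}^H sum_{h'=h}^H (r_{h'} - r^_{h'})^2 *)
Definition traj_exp_loss (Rstar : S -> A -> R) (M : model) (tau : seq (S * A)) : R :=
  \sum_(h < size tau) loss_from Rstar M (drop h tau).

Definition exp_loss (Pstar : kernel) (Rstar : S -> A -> R) (piD : policy)
    (s1 : S) (H : nat) (M : model) : R :=
  \sum_(tau : H.-tuple (S * A))
     traj_prob Pstar piD s1 tau * traj_exp_loss Rstar M tau.

End MDPDefs.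

(* Main.v *)
Require Import Defs.
From HB Require Import structures.
From mathcomp Require Import all_boot all_order all_algebra.
From mathcomp Require Import reals.
From mathcomp Require Import lra.
Import Order.TTheory GRing.Theory Num.Theory.
Local Open Scope ring_scope.

Section Ex.
Variable R : realType.
Definition St := 'I_3.
Definition Ac := 'I_1.
Definition Ps : kernel R St Ac := fun _ _ => [ffun s' : St => if val s' == 2%N then 0 else 2^-1].
Definition Rs : St -> Ac -> R := fun s _ => if val s == 1%N then 1 else 0.
Definition PM : kernel R St Ac := fun _ _ => [ffun s' : St => if val s' == 2%N then 1 else 0].
Definition RM : St -> Ac -> R := fun s _ => if val s == 2%N then 2/5 else if val s == 1%N then 1 else 0.
Definition piU : policy R St Ac := fun _ _ => [ffun _ => 1].
Definition s0 : St := ord0.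

Lemma sum3 (F : St -> R) : \sum_(s : St) F s = F ord0 + F (inord 1) + F (inord 2).
Proof.
rewrite !big_ord_recl big_ord0 addr0 !addrA.
by congr (F _ + F _ + F _); apply/val_inj; rewrite /= inordK.
Qed.

Lemma sum1 (F : Ac -> R) : \sum_(s : Ac) F s = F ord0.
Proof. by rewrite big_ord1. Qed.


Ltac simp := rewrite /traj_prob /traj_exp_loss /= !big_ord_recl big_ord0 /= ?sum3 ?sum1 /= !ffunE /Rs /RM /= ?inordK //= ?ffunE /= ?inordK //=.

Lemma pointwise (tau : 2.-tuple (St * Ac)) :
  traj_prob Ps piU s0 tau * traj_exp_loss Rs (Model PM RM) tau <=
  traj_prob Ps piU s0 tau * traj_exp_loss Rs (Model Ps Rs) tau.
Proof.
case: tau => [[|[s a] [|[s' a'] []]] //] Hsz; rewrite /= in Hsz *; clear Hsz.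
case: a => [[|n1] H1] //; case: a' => [[|n2] H2] //.
case: s => [[|[|[|n3]]] H3] //; case: s' => [[|[|[|n4]]] H4] //; simp; lra.
Qed.

Definition t0 : 2.-tuple (St * Ac) := [tuple (ord0, ord0); (ord0, ord0)].

Lemma strict :
  traj_prob Ps piU s0 t0 * traj_exp_loss Rs (Model PM RM) t0 <
  traj_prob Ps piU s0 t0 * traj_exp_loss Rs (Model Ps Rs) t0.
Proof. simp; lra. Qed.

Lemma loss_lt : exp_loss Ps Rs piU s0 2 (Model PM RM) < exp_loss Ps Rs piU s0 2 (Model Ps Rs).
Proof.
rewrite /exp_loss (bigD1 t0) //= [X in _ < X](bigD1 t0) //=.
apply: ltr_leD; first exact: strict.
apply: ler_sum => tau _; exact: pointwise.
Qed.

End Ex.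

Theorem proposition1 (R : realType) :
  exists (S A : finType) (H : nat) (s1 : S) (Pstar : kernel R S A)
         (Rstar : S -> A -> R) (Rmax : R) (piD : policy R S A),
    [/\ valid_kernel Pstar, stochastic Pstar,
        (forall s a, 0 <= Rstar s a <= Rmax), valid_policy piD &
    exists (M : model R S A) (pi : policy R S A),
      valid_kernel (trans M) /\
      (forall s a, 0 <= rew M s a <= Rmax) /\
      (exists s a, trans M s a != Pstar s a \/ rew M s a != Rstar s a) /\
      exp_loss Pstar Rstar piD s1 H M
        < exp_loss Pstar Rstar piD s1 H (Model Pstar Rstar) /\
      valid_policy pi /\
      J M pi H s1 != J (Model Pstar Rstar) pi H s1].
Proof.
exists St, Ac, 2%N, s0, (@Ps R), (@Rs R), 1, (@piU R).
have vpi : valid_policy (@piU R).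
  by move=> h s; split=> [a|]; rewrite ?sum1 ffunE.
split => //.
- move=> s a; split=> [s'|]; first by rewrite ffunE; case: ifP => _ //; lra.
  by rewrite sum3 !ffunE /= ?inordK //=; lra.
- exists s0, ord0, s0; rewrite ffunE /=; apply/andP; split; lra.
- move=> [[|[|[|n]]] Hn] a //=; rewrite /Rs /=; apply/andP; split; lra.
exists (Model (@PM R) (@RM R)), (@piU R); split; [|split; [|split; [|split; [|split]]]].
- move=> s a; split=> [s'|]; first by rewrite ffunE; case: ifP => _ //; lra.
  by rewrite sum3 !ffunE /= ?inordK //=; lra.
- move=> [[|[|[|n]]] Hn] a //; rewrite /Rs /RM /=; apply/andP; split; lra.
- exists (inord 2), ord0; right; rewrite /RM /Rs /= inordK //; apply/eqP; lra.
- exact: loss_lt.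
- exact: vpi.
- have z (F : St -> R) : \sum_(s' : St) F s' * 0 = 0 by rewrite big1 // => i _; rewrite mulr0.
  rewrite /J /= !sum1 !sum3 !ffunE /= !sum1 !ffunE !z /RM /Rs /= ?inordK //=; apply/eqP; lra.
Qed.
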